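(* Let $n\ge2$ and $\mathbf{q}\in(\Bbbk^\times)^n$; indices are modulo $n$. (1) Let $\alpha_0,\dots,\alpha_{n-1}\in\Bbbk^\times$ and set $p_i=\frac{\alpha_{i+1}}{\alpha_i}q_i$ for $0\le i<n$. The linear map $\phi_\alpha:B_n(\mathbf{q})\to B_n(\mathbf{p})$ with $\phi_\alpha(e_i)=e_i$, $\phi_\alpha(a_i)=a_i$, $\phi_\alpha(b_i)=\alpha_ib_i$ extends to an isomorphism. (2) Set $p_i=q_{i-1}$ for $0\le i<n$. The linear map $\psi:B_n(\mathbf{q})\to B_n(\mathbf{p})$ with $\psi(e_i)=e_{i+1}$, $\psi(a_i)=a_{i+1}$, $\psi(b_i)=b_{i+1}$ extends to an isomorphism.
   Context: $\Bbbk$ is an algebraically closed field of characteristic zero. Paths are written left to right. $B_n(\mathbf{q})=\Bbbk Q/(b_ia_i-q_ia_ib_{i+1},\ i=0,\dots,n-1)$, where $Q$ has vertices $e_0,\dots,e_{n-1}$, arrows $a_i:e_i\to e_{i+1}$ and loops $b_i$ at $e_i$, indices modulo $n$. *)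

(* Defs.v *)
From HB Require Import structures.
From mathcomp Require Import all_boot all_order all_algebra.
Set Implicit Arguments. Unset Strict Implicit. Unset Printing Implicit Defensive.
Import GRing.Theory.
Local Open Scope ring_scope.

(* Indices modulo n are elements of 'I_n; i+1 is [ordS i], i-1 is [ord_pred i].
   Paths are written left to right, so the product x * y in the algebra is
   "x followed by y". *)

Definition alg_hom (k : fieldType) (A B : algType k) (f : A -> B) : Prop :=
  linear f /\ monoid_morphism f.

Definition Bn_rels (k : fieldType) (n : nat) (q : 'I_n -> k) (B : algType k)
    (e a b : 'I_n -> B) : Prop :=
  [/\ forall i j : 'I_n, e i * e j = (if i == j then e i else 0),
      \sum_(i < n) e i = 1,
      forall i : 'I_n, e i * a i * e (ordS i) = a i,
      forall i : 'I_n, e i * b i * e i = b i &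
      forall i : 'I_n, b i * a i = q i *: (a i * b (ordS i))].

(* (A, e, a, b) is (a model of) the algebra B_n(q): the quotient of the path
   algebra kQ by the ideal generated by b_i a_i - q_i a_i b_{i+1}.  It is
   characterised by its universal property (kQ is the free algebra on the
   quiver Q, and the quotient by the relations is the initial algebra
   generated by such data). *)
Definition is_Bn (k : fieldType) (n : nat) (q : 'I_n -> k) (A : algType k)
    (e a b : 'I_n -> A) : Prop :=
  Bn_rels q e a b /\
  forall (B : algType k) (E X Y : 'I_n -> B), Bn_rels q E X Y ->
    (exists f : A -> B, alg_hom f /\
       forall i, [/\ f (e i) = E i, f (a i) = X i & f (b i) = Y i]) /\
    (forall f g : A -> B, alg_hom f -> alg_hom g ->
       (forall i, [/\ f (e i) = g (e i), f (a i) = g (a i) & f (b i) = g (b i)]) ->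
       f =1 g).

Definition alg_iso (k : fieldType) (A B : algType k) (f : A -> B) : Prop :=
  alg_hom f /\ bijective f.

(* Main.v *)
Require Import Defs.
From HB Require Import structures.
From mathcomp Require Import all_boot all_order all_algebra.
From mathcomp Require Import ring.
Import GRing.Theory.
Local Open Scope ring_scope.

Lemma alg_hom_id {k : fieldType} {A : algType k} : alg_hom (@id A).
Proof. by split; [move=> x u v| split]. Qed.

Lemma alg_hom_comp {k : fieldType} {A B C : algType k} {f : A -> B} {g : B -> C} :
  alg_hom f -> alg_hom g -> alg_hom (g \o f).
Proof.
move=> [lf [f1 fM]] [lg [g1 gM]]; split.
  by move=> c u v /=; rewrite lf lg.
by split => [|x y] /=; rewrite ?f1 ?g1 ?fM ?gM.
Qed.

Lemma alg_homZ {k : fieldType} {A B : algType k} {f : A -> B} (c : k) (x : A) :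
  alg_hom f -> f (c *: x) = c *: f x.
Proof.
case=> lf _; have := lf c x 0; rewrite !addr0 => ->.
have := lf 1 0 0; rewrite !scale1r !addr0 => h.
have h0 : f 0 = 0 by apply: (@addrI _ (f 0)); rewrite addr0 -h.
by rewrite h0 addr0.
Qed.

Lemma bn_iso {k : fieldType} {n : nat} {q q' : 'I_n -> k}
  {A : algType k} {e a b : 'I_n -> A} {A' : algType k} {e' a' b' : 'I_n -> A'}
  (HA : is_Bn q e a b) (HA' : is_Bn q' e' a' b') {f : A -> A'} {g : A' -> A} :
  alg_hom f -> alg_hom g ->
  (forall i, [/\ g (f (e i)) = e i, g (f (a i)) = a i & g (f (b i)) = b i]) ->
  (forall i, [/\ f (g (e' i)) = e' i, f (g (a' i)) = a' i & f (g (b' i)) = b' i]) ->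
  alg_iso f.
Proof.
move=> hf hg gf fg; split => //; exists g.
  move=> x; have := (HA.2 _ _ _ _ HA.1).2 (g \o f) id (alg_hom_comp hf hg)
     alg_hom_id gf; exact.
move=> x; have := (HA'.2 _ _ _ _ HA'.1).2 (f \o g) id (alg_hom_comp hg hf)
     alg_hom_id fg; exact.
Qed.

Theorem lemma2p9 (k : closedFieldType) (hchar : [pchar k] =i pred0)
  (n : nat) (hn : (2 <= n)%N) (q : 'I_n -> k) (hq : forall i, q i != 0) :
  (* (1) rescaling of the loops *)
  (forall (alpha : 'I_n -> k), (forall i, alpha i != 0) ->
   forall (p : 'I_n -> k), (forall i, p i = alpha (ordS i) / alpha i * q i) ->
   forall (A : algType k) (e a b : 'I_n -> A) (A' : algType k) (e' a' b' : 'I_n -> A'),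
     is_Bn q e a b -> is_Bn p e' a' b' ->
     exists phi : A -> A', alg_iso phi /\
       forall i, [/\ phi (e i) = e' i, phi (a i) = a' i & phi (b i) = alpha i *: b' i]) /\
  (* (2) rotation of the quiver *)
  (forall (p : 'I_n -> k), (forall i, p i = q (ord_pred i)) ->
   forall (A : algType k) (e a b : 'I_n -> A) (A' : algType k) (e' a' b' : 'I_n -> A'),
     is_Bn q e a b -> is_Bn p e' a' b' ->
     exists psi : A -> A', alg_iso psi /\
       forall i, [/\ psi (e i) = e' (ordS i), psi (a i) = a' (ordS i)
                   & psi (b i) = b' (ordS i)]).
Proof.
split.
- move=> alpha hal p hp A e a b A' e' a' b' HA HA'.
  have R1 : Bn_rels q e' a' (fun i => alpha i *: b' i).
    case: HA'.1 => h1 h2 h3 h4 h5; split => // i.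
      by rewrite -scalerAr -scalerAl h4.
    rewrite -scalerAl h5 hp scalerA -scalerAr scalerA; congr (_ *: _).
    by field; rewrite !hal.
  have R2 : Bn_rels p e a (fun i => (alpha i)^-1 *: b i).
    case: HA.1 => h1 h2 h3 h4 h5; split => // i.
      by rewrite -scalerAr -scalerAl h4.
    rewrite -scalerAl h5 hp scalerA -scalerAr scalerA; congr (_ *: _).
    by field; rewrite !hal.
  have [[f [hf fE]] _] := HA.2 _ _ _ _ R1.
  have [[g [hg gE]] _] := HA'.2 _ _ _ _ R2.
  exists f; split => //.
  apply: (bn_iso HA HA' hf hg) => i.
    case: (fE i) (gE i) => -> -> -> [-> -> gb]; split => //.
    by rewrite (alg_homZ _ _ hg) gb scalerA mulfV ?hal // scale1r.
  case: (gE i) (fE i) => -> -> -> [-> -> fb]; split => //.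
  by rewrite (alg_homZ _ _ hf) fb scalerA mulVf ?hal // scale1r.
- move=> p hp A e a b A' e' a' b' HA HA'.
  have R1 : Bn_rels q (fun i => e' (ordS i)) (fun i => a' (ordS i)) (fun i => b' (ordS i)).
    case: HA'.1 => h1 h2 h3 h4 h5; split => //.
    + by move=> i j; rewrite h1 (inj_eq (@ordS_inj n)).
    + by rewrite -h2 [RHS](reindex_inj (@ordS_inj n)).
    + by move=> i; rewrite h5 hp ordSK.
  have R2 : Bn_rels p (fun i => e (ord_pred i)) (fun i => a (ord_pred i)) (fun i => b (ord_pred i)).
    case: HA.1 => h1 h2 h3 h4 h5; split => //.
    + by move=> i j; rewrite h1 (inj_eq (@ord_pred_inj n)).
    + by rewrite -h2 [RHS](reindex_inj (@ord_pred_inj n)).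
    + by move=> i; have := h3 (ord_pred i); rewrite ord_predK ordSK.
    + by move=> i; have := h5 (ord_pred i); rewrite ord_predK ordSK hp.
  have [[f [hf fE]] _] := HA.2 _ _ _ _ R1.
  have [[g [hg gE]] _] := HA'.2 _ _ _ _ R2.
  exists f; split => //.
  apply: (bn_iso HA HA' hf hg) => i.
    by case: (fE i) (gE (ordS i)) => -> -> -> [-> -> ->]; rewrite ordSK.
  by case: (gE i) (fE (ord_pred i)) => -> -> -> [-> -> ->]; rewrite ord_predK.
Qed.
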